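(* Let $\mathbb{R}^n$ be equipped with an arbitrary norm $\|\cdot\|$, let $g:\mathbb{R}^n\to\mathbb{R}^n$, $y\in\mathbb{R}^n$, $\rho>0$, $L\ge0$, $\mu>0$, and $B=\{x\in\mathbb{R}^n:\|x\|\le\rho\}$. Assume $g(0)=0$, $g$ is differentiable in $B$ with $\|g'(x^a)-g'(x^b)\|\le L\|x^a-x^b\|$ for all $x^a,x^b\in B$, that for every $x\in B$ the matrix $g'(x)$ is invertible with $\|g'(x)^{-1}\|\le \frac1\mu$, and that $\|y\|<\mu\rho$. Then there exists a solution $x^*$ of $g(x)=y$ with $\|x^*\|\le\frac{\|y\|}{\mu}$.
   Context: Matrix norms are operator norms subordinate to the chosen vector norm. *)

(* Defs.v *)
From HB Require Import structures.
From mathcomp Require Import all_boot all_order all_algebra.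
From mathcomp Require Import boolp classical_sets reals.
Set Implicit Arguments. Unset Strict Implicit. Unset Printing Implicit Defensive.
Import Order.TTheory GRing.Theory Num.Theory.
Local Open Scope ring_scope.
Local Open Scope classical_set_scope.

Definition is_vnorm (R : realType) (n : nat) (N : 'cV[R]_n -> R) : Prop :=
  (forall x, N x = 0 -> x = 0) /\
  (forall (a : R) x, N (a *: x) = `|a| * N x) /\
  (forall x y, N (x + y) <= N x + N y).

Definition opnorm (R : realType) (n : nat) (N : 'cV[R]_n -> R) (A : 'M[R]_n) : R :=
  sup [set N (A *m x) | x in [set x : 'cV[R]_n | N x <= 1]].

Definition has_deriv (R : realType) (n : nat) (N : 'cV[R]_n -> R)
  (g : 'cV[R]_n -> 'cV[R]_n) (x : 'cV[R]_n) (D : 'M[R]_n) : Prop :=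
  forall eps : R, 0 < eps -> exists2 delta : R, 0 < delta &
    forall h : 'cV[R]_n, N h < delta ->
      N (g (x + h) - g x - D *m h) <= eps * N h.

(* Main.v *)
Require Import Defs.
From HB Require Import structures.
From mathcomp Require Import all_boot all_order all_algebra.
From mathcomp Require Import boolp classical_sets reals.
From mathcomp Require Import topology normedtype derive.
From mathcomp Require Import ring lra.
Set Implicit Arguments. Unset Strict Implicit. Unset Printing Implicit Defensive.
Import Order.TTheory GRing.Theory Num.Theory.
Import numFieldNormedType.Exports.
Local Open Scope ring_scope.
Local Open Scope classical_set_scope.

Section mxnorm.
Context (R : realType).

Lemma mx_entry_le m k (x : 'M[R]_(m,k)) i j : `|x i j| <= `|x|.
Proof.
rewrite [X in _ <= X]/Num.norm /= mx_normrE.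
exact: (le_bigmax _ (fun ij : 'I_m * 'I_k => `|x ij.1 ij.2|) (i, j)).
Qed.

Lemma mx_norm_le m k (x : 'M[R]_(m,k)) b :
  0 <= b -> (forall i j, `|x i j| <= b) -> `|x| <= b.
Proof.
move=> b0 H; rewrite [X in X <= _]/Num.norm /= mx_normrE.
by apply: bigmax_le => // ij _; apply: H.
Qed.

Lemma norm_trmx m k (x : 'M[R]_(m,k)) : `|x^T| = `|x|.
Proof.
apply/eqP; rewrite eq_le; apply/andP; split; apply: mx_norm_le => // i j.
  by rewrite mxE; exact: mx_entry_le.
by have := mx_entry_le x^T j i; rewrite mxE.
Qed.

Lemma trmx_cont m k : continuous (fun x : 'M[R]_(m,k) => x^T).
Proof.
move=> x; apply/(@cvgrPdist_lt _ _ _ _ (@nbhs_filter _ x)) => eps e0.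

apply/(@nbhs_normP R [the normedModType R of (matrix R m k)]).
exists eps => // z /= hz.
by rewrite -linearB /= norm_trmx.
Qed.

Lemma cV_compact n (A : set 'cV[R]_n) : bounded_set A -> closed A -> compact A.
Proof.
move=> bA cA.
pose B := [set u : 'rV[R]_n | A u^T].
have -> : A = (fun u : 'rV[R]_n => u^T) @` B.
  apply/seteqP; split => [x Ax | _ [u Bu <-] //].
  by exists x^T; rewrite /B /= ?trmxK.
have tc : continuous (fun u : 'rV[R]_n => u^T) by apply: trmx_cont.
apply: (continuous_compact (@continuous_subspaceT _ _ B _ tc)).
apply: bounded_closed_compact.
  case: bA => M0 [M0r HM]; exists M0; split => // M hM u Bu.
  by rewrite /= -norm_trmx; apply: (HM M hM).
by apply: (@preimage_closed _ _ (fun u : 'rV[R]_n => u^T) A) => // u _; exact: tc.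
Qed.

End mxnorm.

Section vnorm.
Context (R : realType) (n : nat) (N : 'cV[R]_n -> R) (hN : is_vnorm N).

Lemma NZ a x : N (a *: x) = `|a| * N x.
Proof. by case: hN => _ [-> _]. Qed.
Lemma ND x z : N (x + z) <= N x + N z.
Proof. by case: hN => _ [_ ->]. Qed.
Lemma N_eq0 x : N x = 0 -> x = 0.
Proof. by case: hN => + _; apply. Qed.
Lemma N0 : N 0 = 0.
Proof. by rewrite -(scale0r (0 : 'cV[R]_n)) NZ normr0 mul0r. Qed.
Lemma NN x : N (- x) = N x.
Proof. by rewrite -scaleN1r NZ normrN normr1 mul1r. Qed.
Lemma N_ge0 x : 0 <= N x.
Proof.
have := ND x (- x); rewrite subrr N0 NN => h.
by rewrite -(pmulr_rge0 _ (ltr0n R 2)) mulr2n mulrDl mul1r.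
Qed.
Lemma NB x z : N x - N z <= N (x - z).
Proof. by rewrite lerBlDr; have := ND (x - z) z; rewrite subrK. Qed.
Lemma N_dist x z : `|N x - N z| <= N (x - z).
Proof.
have h1 := NB x z; have h2 := NB z x.
rewrite -(NN (z - x)) opprB in h2.
by rewrite ler_norml h1 andbT lerNl opprB.
Qed.

Lemma N_sum k (f : 'I_k -> 'cV[R]_n) : N (\sum_i f i) <= \sum_i N (f i).
Proof.
elim/big_rec2: _ => [|i a b _ h]; first by rewrite N0.
by apply: le_trans (ND _ _) _; rewrite lerD2l.
Qed.

Definition Cn := \sum_(i < n) N (delta_mx i ord0).
Lemma Cn_ge0 : 0 <= Cn.
Proof. by apply: sumr_ge0 => i _; apply: N_ge0. Qed.

Lemma N_upper x : N x <= Cn * `|x|.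
Proof.
have Hx : x = \sum_(i < n) x i ord0 *: delta_mx i ord0.
  rewrite {1}(matrix_sum_delta x); apply: eq_bigr => i _.
  by rewrite big_ord1.
rewrite {1}Hx; apply: le_trans (N_sum _) _.
rewrite /Cn mulr_suml; apply: ler_sum => i _.
by rewrite NZ mulrC ler_wpM2l ?N_ge0 // mx_entry_le.
Qed.
End vnorm.

Section cont.
Context (R : realType) (n : nat).

Lemma lip_cont (f : 'cV[R]_n -> R) (K : R) :
  0 <= K -> (forall z z', `|f z - f z'| <= K * `|z - z'|) -> continuous f.
Proof.
move=> K0 H x; apply/(@cvgrPdist_lt _ _ _ _ (@nbhs_filter _ x)) => eps e0.
apply/(@nbhs_normP R [the normedModType R of (matrix R n 1)]).
exists (eps / (K + 1)); first by rewrite /= divr_gt0 // ltr_wpDl.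
move=> z /= hz; apply: le_lt_trans (H _ _) _.
have K1 : 0 < K + 1 by rewrite ltr_wpDl.
apply: (@le_lt_trans _ _ (K * (eps / (K + 1)))).
  by rewrite ler_wpM2l // ltW.
by rewrite mulrA ltr_pdivrMr // mulrDr mulr1 mulrC ltrDl.
Qed.

End cont.
Section low.
Context (R : realType) (n : nat) (N : 'cV[R]_n -> R) (hN : is_vnorm N).

Lemma N_cont : continuous N.
Proof.
apply: (@lip_cont _ _ N (Cn N) (Cn_ge0 hN)) => z z'.
exact: le_trans (N_dist hN z z') (N_upper hN (z - z')).
Qed.

Lemma Nsh_cont (x : 'cV[R]_n) : continuous (fun z : 'cV[R]_n => N (z - x)).
Proof.
apply: (@lip_cont _ _ _ (Cn N) (Cn_ge0 hN)) => z z'.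
apply: le_trans (N_dist hN _ _) _.
rewrite (_ : z - x - (z' - x) = z - z'); last by rewrite opprB addrA subrK.
exact: N_upper.
Qed.

Lemma N_lower : exists2 c, 0 < c & forall x, c * `|x| <= N x.
Proof.
case: (pselect (exists x : 'cV[R]_n, x != 0)) => [[x0 x0n]|H]; last first.
  exists 1 => // x; have -> : x = 0.
    by case: (eqVneq x 0) => // xn; exfalso; apply: H; exists x.
  by rewrite normr0 mulr0 (N0 hN).
pose S := [set x : 'cV[R]_n | `|x| <= 1] `&` [set x | 1 <= `|x|].
have nx0 : 0 < `|x0| by rewrite normr_gt0.
have nrm1 (x : 'cV[R]_n) : x != 0 -> Num.norm ((Num.norm x)^-1 *: x) = 1.
  move=> xn; rewrite normrZ ger0_norm ?invr_ge0 // mulVf //.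
  by rewrite normr_eq0.
have S0 : S !=set0.
  by exists (`|x0|^-1 *: x0); rewrite /S /= nrm1.
have cS : compact S.
  apply: cV_compact.
    exists 1; split; first by rewrite num_real.
    by move=> M hM x [/= h _]; apply: le_trans h (ltW hM).
  apply: closedI.
    apply: (@preimage_closed _ _ (fun x : 'cV[R]_n => `|x|) [set r | r <= 1]).
      by move=> x _; apply: norm_continuous.
    exact: closed_le.
  apply: (@preimage_closed _ _ (fun x : 'cV[R]_n => `|x|) [set r | 1 <= r]).
    by move=> x _; apply: norm_continuous.
  exact: closed_ge.
have [xm xmS xmin] := compact_EVT_min S0 cS (continuous_subspaceT N_cont).
move: xmS; rewrite inE => -[/= xm1 xm2].
have xm0 : xm != 0 by apply: contraTneq xm2 => ->; rewrite normr0 ler10.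
have c0 : 0 < N xm.
  rewrite lt_def (N_ge0 hN) andbT; apply/eqP => h.
  by move/eqP: xm0; apply; apply: (N_eq0 hN).
exists (N xm) => // x.
have [->|xn] := eqVneq x 0; first by rewrite normr0 mulr0 (N_ge0 hN).
have nx : 0 < `|x| by rewrite normr_gt0.
have := xmin (`|x|^-1 *: x); rewrite (NZ hN) ger0_norm ?invr_ge0 ?normr_ge0 //.
rewrite mulrC ler_pdivlMr // ; apply.
by rewrite inE /S /= nrm1.
Qed.
End low.

Section opn.
Context (R : realType) (n : nat) (N : 'cV[R]_n -> R) (hN : is_vnorm N).

Lemma ballN_compact (x : 'cV[R]_n) a : compact [set z | N (z - x) <= a].
Proof.
have [c c0 hc] := N_lower hN.
apply: cV_compact.
  exists (`|x| + a / c); split; first by rewrite num_real.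
  move=> M hM z /= hz; apply: le_trans (ltW hM).
  have h1 : `|z| <= `|z - x| + `|x|.
    by rewrite -{1}(subrK x z) ler_normD.
  apply: le_trans h1 _; rewrite addrC lerD2l.
  by rewrite ler_pdivlMr // mulrC; apply: le_trans (hc _) hz.
apply: (@preimage_closed _ _ (fun z : 'cV[R]_n => N (z - x)) [set r | r <= a]).
  by move=> z _; apply: Nsh_cont.
exact: closed_le.
Qed.

Lemma mulmx_norm (A : 'M[R]_n) (x : 'cV[R]_n) : `|A *m x| <= n%:R * `|A| * `|x|.
Proof.
apply: mx_norm_le; first by rewrite !mulr_ge0 ?normr_ge0 ?ler0n.
move=> i j; rewrite mxE.
apply: le_trans (ler_norm_sum _ _ _) _.
apply: (@le_trans _ _ (\sum_(k < n) `|A| * `|x|)).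
  apply: ler_sum => k _; rewrite normrM.
  by apply: ler_pM; rewrite ?normr_ge0 ?mx_entry_le.
by rewrite sumr_const card_ord mulr_natl mulrnAl.
Qed.

Lemma opnorm_le (A : 'M[R]_n) v : N (A *m v) <= opnorm N A * N v.
Proof.
have [c c0 hc] := N_lower hN.
set E := [set N (A *m x) | x in [set x : 'cV[R]_n | N x <= 1]].
have hs : has_sup E.
  split; first by exists (N (A *m 0)), 0 => //=; rewrite (N0 hN) ler01.
  exists (Cn N * (n%:R * `|A| * c^-1)) => _ [x /= x1 <-].
  apply: le_trans (N_upper hN _) _; apply: ler_wpM2l; first exact: Cn_ge0.
  apply: le_trans (mulmx_norm _ _) _.
  rewrite ler_wpM2l ?mulr_ge0 ?ler0n ?normr_ge0 // -[c^-1]mulr1 ler_pdivlMl //.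
  exact: le_trans (hc _) x1.
have ub := sup_upper_bound hs.
have [v0|vn] := eqVneq v 0.
  by rewrite v0 mulmx0 (N0 hN) mulr0.
have Nv : 0 < N v.
  rewrite lt_def (N_ge0 hN) andbT; apply/eqP => h.
  by move/eqP: vn; apply; apply: (N_eq0 hN).
have := ub (N (A *m ((N v)^-1 *: v))).
rewrite -scalemxAr (NZ hN) ger0_norm ?invr_ge0 ?(N_ge0 hN) //.
rewrite mulrC ler_pdivrMr // => h; apply: h.
exists ((N v)^-1 *: v) => //=.
by rewrite (NZ hN) ger0_norm ?invr_ge0 ?(N_ge0 hN) // mulVf // gt_eqF.
by rewrite -scalemxAr (NZ hN) ger0_norm ?invr_ge0 ?(N_ge0 hN) // mulrC.
Qed.
End opn.

Section inv.
Context (R : realType) (n : nat) (N : 'cV[R]_n -> R) (hN : is_vnorm N).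

Lemma inv_upper (A : 'M[R]_n) mu : 0 < mu ->
  opnorm N (invmx A) <= 1 / mu -> forall w, N (invmx A *m w) <= N w / mu.
Proof.
move=> mu0 hA w; apply: le_trans (opnorm_le hN _ _) _.
rewrite mulrC; apply: ler_wpM2l; first exact: N_ge0.
by rewrite -div1r.
Qed.

Lemma inv_lower (A : 'M[R]_n) mu : 0 < mu -> A \in unitmx ->
  opnorm N (invmx A) <= 1 / mu -> forall v, mu * N v <= N (A *m v).
Proof.
move=> mu0 uA hA v.
have h := inv_upper mu0 hA (A *m v).
rewrite mulKmx // in h.
by rewrite mulrC -ler_pdivlMr.
Qed.

Lemma deriv_cont (g : 'cV[R]_n -> 'cV[R]_n) x D :
  has_deriv N g x D -> {for x, continuous g}.
Proof.
move=> hd.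
have [c c0 hc] := N_lower hN.
have [d d0 hd1] := hd 1 ltr01.
set K := `|opnorm N D| + 1.
have K0 : 0 < K by rewrite ltr_wpDl.
have C1 : 0 < Cn N + 1 by rewrite ltr_wpDl // Cn_ge0.
apply/(@cvgrPdist_lt _ _ _ _ (@nbhs_filter _ x)) => eps e0.
apply/(@nbhs_normP R [the normedModType R of (matrix R n 1)]).
exists (Num.min (d / (Cn N + 1)) (eps * c / (K * (Cn N + 1)))).
  by rewrite /= lt_min !divr_gt0 ?mulr_gt0.
move=> z /= hz; move: hz; rewrite lt_min => /andP[h1 h2].
have hzx : N (z - x) <= (Cn N + 1) * `|x - z|.
  apply: le_trans (N_upper hN _) _.
  by rewrite -normrN opprB ler_wpM2r ?normr_ge0 // lerDl.
have hzd : N (z - x) < d.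
  by apply: le_lt_trans hzx _; rewrite mulrC -ltr_pdivlMr.
have := hd1 _ hzd; rewrite [x + _]addrC subrK => hb.
have hg : N (g z - g x) <= K * N (z - x).
  have e1 : g z - g x = (g z - g x - D *m (z - x)) + D *m (z - x).
    by rewrite subrK.
  rewrite e1; apply: le_trans (ND hN _ _) _.
  apply: le_trans (lerD hb (opnorm_le hN D (z - x))) _.
  rewrite /K mulrDl mul1r addrC lerD2r ler_wpM2r ?(N_ge0 hN) //.
  exact: ler_norm.
have : c * `|g x - g z| < c * eps.
  apply: le_lt_trans (hc _) _; rewrite -(NN hN) opprB.
  apply: le_lt_trans hg _.
  apply: le_lt_trans (ler_wpM2l (ltW K0) hzx) _.
  rewrite mulrA -ltr_pdivlMl ?mulr_gt0 //.
  by rewrite mulrC [c * eps]mulrC.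
by rewrite ltr_pM2l.
Qed.
End inv.

Section main.
Context (R : realType) (n : nat) (N : 'cV[R]_n -> R)
  (g : 'cV[R]_n -> 'cV[R]_n) (Dg : 'cV[R]_n -> 'M[R]_n) (y : 'cV[R]_n)
  (rho L mu : R)
  (hN : is_vnorm N) (rho0 : 0 < rho) (L0 : 0 <= L) (mu0 : 0 < mu)
  (g0 : g 0 = 0)
  (hD : forall x, N x <= rho -> has_deriv N g x (Dg x))
  (hL : forall xa xb, N xa <= rho -> N xb <= rho ->
     opnorm N (Dg xa - Dg xb) <= L * N (xa - xb))
  (hI : forall x, N x <= rho ->
     Dg x \in unitmx /\ opnorm N (invmx (Dg x)) <= 1 / mu)
  (hy : N y < mu * rho).

Lemma gc z : N z <= rho -> {for z, continuous g}.
Proof. by move=> hz; apply: (deriv_cont hN (hD hz)). Qed.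

Lemma Fc w z : N z <= rho -> {for z, continuous (fun z => N (g z - w))}.
Proof.
move=> hz.
have h := @continuous_comp _ _ _ g (fun v => N (v - w)) z (gc hz) (@Nsh_cont _ _ _ hN w (g z)).
exact h.
Qed.

Lemma phic a : continuous (fun z : 'cV[R]_n => `|N z - a| + (N z - a)).
Proof.
apply: (@lip_cont _ _ _ (2 * Cn N)); first by rewrite mulr_ge0 ?Cn_ge0.
move=> z z'.
have h1 : `|N z - N z'| <= Cn N * `|z - z'|.
  exact: le_trans (N_dist hN z z') (N_upper hN (z - z')).
set p := N z - a; set q := N z' - a.
have epq : p - q = N z - N z' by rewrite /p /q; ring.
have e : (`|p| + p) - (`|q| + q) = (`|p| - `|q|) + (p - q) by ring.
rewrite e; apply: le_trans (ler_normD _ _) _.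
apply: le_trans (lerD (ler_dist_dist p q) (lexx _)) _.
rewrite epq; lra.

Qed.


Lemma phi_ge0 (p : R) : 0 <= `|p| + p.
Proof. by case: (lerP 0 p) => hp; [rewrite ger0_norm //; lra | rewrite ltr0_norm //; lra]. Qed.

Lemma phi_le (p d : R) : 0 <= d -> p <= d -> `|p| + p <= 2 * d.
Proof. by move=> d0 hp; case: (lerP 0 p) => hp'; [rewrite ger0_norm //; lra | rewrite ltr0_norm //; lra]. Qed.

Lemma CL a w : 0 <= a -> a < rho ->
  (forall d, 0 < d -> exists x, N x <= a + d /\ N (g x - w) <= d) ->
  exists x, N x <= a /\ g x = w.
Proof.
move=> a0 arho H.
pose a' := (a + rho) / 2.
have aa' : a < a' by rewrite /a'; lra.
have a'rho : a' < rho by rewrite /a'; lra.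
pose K := [set z : 'cV[R]_n | N (z - 0) <= a'].
have KB z : K z -> N z <= rho.
  by rewrite /K /= subr0 => hz; apply: (le_trans hz); exact: ltW.
pose h := fun z => N (g z - w) + (`|N z - a| + (N z - a)).
have hc : {within K, continuous h}.
  apply: continuous_in_subspaceT => z; rewrite inE => /KB zB.
  apply: cvgD; [exact: nbhs_filter | exact: Fc | exact: phic].
have K0 : K !=set0 by exists 0; rewrite /K /= subr0 (N0 hN); lra.
have [x0 x0K xmin] := compact_EVT_min K0 (@ballN_compact _ _ _ hN 0 a') hc.
rewrite inE in x0K.
have Nge := N_ge0 hN.
case: (lerP (h x0) 0) => hx0.
  have := phi_ge0 (N x0 - a); have := Nge (g x0 - w); rewrite /h in hx0 => n1 n2.
  exists x0; split.
    case: (lerP (N x0 - a) 0) => hp; first lra.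
    by rewrite gtr0_norm // in n2 hx0; lra.
  apply/eqP; rewrite -subr_eq0; apply/eqP; apply: (N_eq0 hN); lra.
exfalso.
pose d := Num.min (h x0 / 4) (a' - a).
have d0 : 0 < d by rewrite /d lt_min; apply/andP; split; lra.
have d1 : d <= h x0 / 4 by rewrite /d ge_min lexx.
have d2 : d <= a' - a by rewrite /d ge_min lexx orbT.
have [x [hx1 hx2]] := H d d0.
have xK : K x by rewrite /K /= subr0; lra.
have hp0 : N x - a <= d by lra.
have hp := phi_le (ltW d0) hp0.
have hm := xmin x (mem_set xK).
rewrite /h in hm hx0 d1; lra.
Qed.

Lemma LS x R1 : N x < rho -> N y / mu < R1 ->
  exists2 s0, 0 < s0 & forall s, 0 < s -> s <= s0 ->
    exists z, g z = g x + s *: y /\ N (z - x) <= s * R1.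
Proof.
move=> hx hR1.
have Nge := N_ge0 hN.
have hxB : N x <= rho by exact: ltW.
have [uA hA] := hI hxB.
pose r := N y / mu.
have r0 : 0 <= r by rewrite /r divr_ge0 // ltW.
have R10 : 0 < R1 by apply: le_lt_trans r0 hR1.
pose eta := mu * (R1 - r) / R1.
have eta0 : 0 < eta by rewrite /eta divr_gt0 // mulr_gt0 // subr_gt0.
have [d1 d10 hd1] := hD hxB eta0.
have L1 : 0 < L + 1 by apply: ltr_wpDl.
pose s0 := Num.min (Num.min (d1 / (2 * R1)) ((rho - N x) / R1))
  (mu / (2 * (L + 1) * R1)).
exists s0.
  rewrite /s0 !lt_min; apply/andP; split; first (apply/andP; split).
  - by rewrite divr_gt0 // mulr_gt0.
  - by rewrite divr_gt0 // subr_gt0.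
  - by rewrite divr_gt0 // !mulr_gt0.
move=> s s0' ss0.
have sa : s <= d1 / (2 * R1).
  by apply: le_trans ss0 _; rewrite /s0 ge_min; apply/orP; left; rewrite ge_min lexx.
have sb : s <= (rho - N x) / R1.
  by apply: le_trans ss0 _; rewrite /s0 ge_min; apply/orP; left; rewrite ge_min lexx orbT.
have sc : s <= mu / (2 * (L + 1) * R1).
  by apply: le_trans ss0 _; rewrite /s0 ge_min lexx orbT.
rewrite ler_pdivlMr ?mulr_gt0 // in sa.
rewrite ler_pdivlMr ?mulr_gt0 // in sb.
rewrite ler_pdivlMr ?mulr_gt0 // in sc.
pose rr := s * R1.
have rr0 : 0 < rr by rewrite mulr_gt0.
have hs1 : rr < d1 by rewrite /rr; lra.
have hs2 : rr <= rho - N x by rewrite /rr; lra.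
have hs3 : L * rr <= mu / 2.
  have : 0 <= L * rr by rewrite mulr_ge0 // ltW.
  rewrite /rr; nra.
pose w := g x + s *: y.
pose K := [set z : 'cV[R]_n | N (z - x) <= rr].
have KB z : K z -> N z <= rho.
  rewrite /K /= => hz.
  have := ND hN (z - x) x; rewrite subrK; lra.
have hc : {within K, continuous (fun z => N (g z - w))}.
  apply: continuous_in_subspaceT => z; rewrite inE => /KB zB.
  exact: Fc.
have K0 : K !=set0 by exists x; rewrite /K /= subrr (N0 hN) ltW.
have [z0 z0K zmin] := compact_EVT_min K0 (@ballN_compact _ _ _ hN x rr) hc.
rewrite inE in z0K.
exists z0; split => //.
have z0B := KB _ z0K.
apply/eqP; rewrite -subr_eq0; apply/negPn/negP => en.
pose e := g z0 - w.
have Ne : 0 < N e.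
  rewrite lt_def Nge andbT; apply/eqP => h0.
  by move/eqP: en; apply; apply: (N_eq0 hN).
pose v := z0 - x.
have Nv : N v <= rr by [].
pose A := Dg x.
pose Ai := invmx A.
pose u := g z0 - g x - A *m v.
have Nu : N u <= eta * N v.
  have := hd1 v (le_lt_trans Nv hs1).
  by rewrite /v [x + _]addrC subrK.
have key : A *m v - e = s *: y - u.
  rewrite /u /e /w; set P := A *m v; clearbody P.
  by apply/matrixP => i j; rewrite !mxE; ring.
have key2 : Ai *m (s *: y - u) = v - Ai *m e.
  by rewrite -key mulmxBr mulKmx.
pose d := - (Ai *m e).
have NAie : N (Ai *m e) <= N e / mu := inv_upper hN mu0 hA e.
have Nd : N d = N (Ai *m e) by rewrite /d (NN hN).
have feas t : 0 <= t -> t <= 1 -> K (z0 + t *: d).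
  move=> t0 t1; rewrite /K /=.
  have id : z0 + t *: d - x = (1 - t) *: v + t *: (Ai *m (s *: y - u)).
    rewrite key2 /d /v; set q := Ai *m e; clearbody q.
    by apply/matrixP => i j; rewrite !mxE; ring.
  rewrite id; apply: le_trans (ND hN _ _) _.
  rewrite !(NZ hN) (ger0_norm t0) ger0_norm ?subr_ge0 //.
  have b1 : N (Ai *m (s *: y - u)) <= rr.
    apply: le_trans (inv_upper hN mu0 hA _) _.
    have b2 : N (s *: y - u) <= s * N y + eta * rr.
      apply: le_trans (ND hN _ _) _; rewrite (NZ hN) (NN hN).
      have hs : `|s| = s := ger0_norm (ltW s0'). rewrite hs.
      apply: lerD => //; apply: le_trans Nu _; apply: ler_wpM2l => //; exact: ltW.
    have eq1 : (s * N y + eta * rr) / mu = rr.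
      rewrite /eta /rr /r; field.
      by apply/andP; split; apply: lt0r_neq0.
    rewrite -[X in _ <= X]eq1; apply: ler_wpM2r => //.
    by rewrite invr_ge0 ltW.

  have c1 : (1 - t) * N v <= (1 - t) * rr by rewrite ler_wpM2l // subr_ge0.
  have c2 : t * N (Ai *m (s *: y - u)) <= t * rr by rewrite ler_wpM2l.
  lra.
have mu4 : 0 < mu / 4 by rewrite divr_gt0.
have [d2 d20 hd2] := hD z0B mu4.
have Nd1 : 0 < N d + 1 by rewrite ltr_wpDl.
pose t := Num.min 1 (d2 / (2 * (N d + 1))).
have t0 : 0 < t by rewrite /t lt_min ltr01 /= divr_gt0 // mulr_gt0.
have t1 : t <= 1 by rewrite /t ge_min lexx.
have t2 : t * (2 * (N d + 1)) <= d2.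
  rewrite -ler_pdivlMr ?mulr_gt0 //.
  by rewrite /t ge_min lexx orbT.
have htd : N (t *: d) < d2.
  rewrite (NZ hN) (gtr0_norm t0).
  have : 0 <= t * N d by rewrite mulr_ge0 // ltW.
  nra.
have z1K := feas t (ltW t0) t1.
have hm := zmin (z0 + t *: d) (mem_set z1K).
have herr := hd2 (t *: d) htd.
move: hm herr.
set G1 := g (z0 + t *: d).
set err := G1 - g z0 - Dg z0 *m (t *: d).
move=> hm herr.
have id2 : G1 - w = (1 - t) *: e + t *: ((A - Dg z0) *m (Ai *m e)) + err.
  rewrite /err; clearbody G1; rewrite /d /e mulmxBl mulKVmx // -scalemxAr mulmxN.
  set P := Dg z0 *m (Ai *m _); clearbody P.
  by apply/matrixP => i j; rewrite !mxE; ring.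
rewrite id2 in hm.
have hop : opnorm N (A - Dg z0) <= L * rr.
  apply: le_trans (hL hxB z0B) _; apply: ler_wpM2l => //.
  by rewrite -(NN hN) opprB.
have b1 : opnorm N (A - Dg z0) * N (Ai *m e) <= N e / 2.
  apply: le_trans (ler_wpM2r (Nge _) hop) _.
  apply: le_trans (ler_wpM2r (Nge _) hs3) _.
  apply: le_trans (ler_wpM2l _ NAie) _; first by rewrite divr_ge0 // ltW.
  by rewrite le_eqVlt; apply/orP; left; apply/eqP; field; apply: lt0r_neq0.
have b2 : N ((A - Dg z0) *m (Ai *m e)) <= N e / 2.
  exact: le_trans (opnorm_le hN _ _) b1.
have b3 : N err <= t * N e / 4.
  apply: le_trans herr _; rewrite (NZ hN) (gtr0_norm t0) Nd.
  have : mu / 4 * (t * N (Ai *m e)) <= mu / 4 * (t * (N e / mu)).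
    by apply: ler_wpM2l; [exact: ltW | apply: ler_wpM2l; [exact: ltW|]].
  move=> h; apply: le_trans h _.
  by rewrite le_eqVlt; apply/orP; left; apply/eqP; field; apply: lt0r_neq0.
have b4 : N ((1 - t) *: e + t *: ((A - Dg z0) *m (Ai *m e)) + err) <=
    (1 - t) * N e + t * (N e / 2) + t * N e / 4.
  apply: le_trans (ND hN _ _) _; apply: lerD => //.
  apply: le_trans (ND hN _ _) _; rewrite !(NZ hN) (gtr0_norm t0) ger0_norm ?subr_ge0 //.
  by apply: lerD => //; apply: ler_wpM2l => //; exact: ltW.
have : 0 < t * N e by rewrite mulr_gt0.
rewrite -/e in hm.
lra.
Qed.


Lemma G R1 : N y / mu < R1 -> R1 < rho -> exists x, g x = y /\ N x <= R1.
Proof.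
move=> hr hR.
have Nge := N_ge0 hN.
have r0 : 0 <= N y / mu by rewrite divr_ge0 // ltW.
have R10 : 0 < R1 by apply: le_lt_trans r0 hr.
pose T := [set t : R | (0 <= t) && (t <= 1) /\
   exists x, g x = t *: y /\ N x <= t * R1].
have T0 : T 0.
  split; first by rewrite lexx ler01.
  by exists 0; rewrite g0 scale0r (N0 hN) mul0r.
have hsT : has_sup T.
  split; first by exists 0.
  by exists 1 => t [/andP[_ ?] _].
pose ts := sup T.
have ts0 : 0 <= ts := sup_upper_bound hsT T0.
have ts1 : ts <= 1.
  by apply: ge_sup; [exists 0 | move=> t [/andP[_ ?] _]].
have tsT : exists x, g x = ts *: y /\ N x <= ts * R1.
  have H : forall d, 0 < d -> exists x, N x <= ts * R1 + d /\ N (g x - ts *: y) <= d.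
    move=> d d0.
    have Ny1 : 0 < N y + 1 by rewrite ltr_wpDl.
    pose q := d / (N y + 1).
    have q0 : 0 < q by rewrite divr_gt0.
    have qd : q * (N y + 1) = d by rewrite /q divfK // gt_eqF.
    have [t [/andP[t0 t1] [x [hx1 hx2]]] ht] := sup_adherent q0 hsT.
    have tts : t <= ts := sup_upper_bound hsT (conj (introT andP (conj t0 t1)) (ex_intro _ x (conj hx1 hx2))).
    exists x; split.
      have : t * R1 <= ts * R1 by rewrite ler_wpM2r // ltW.
      lra.
    rewrite hx1 -scalerBl (NZ hN) ler0_norm ?subr_le0 //.
    have : 0 <= N y := Nge y.
    rewrite -/ts in ht.
    nra.
  have ha : 0 <= ts * R1 by rewrite mulr_ge0 // ltW.
  have hb : ts * R1 < rho.
    have : ts * R1 <= R1 by rewrite ler_piMl // ltW.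
    lra.
  have [x [hx1 hx2]] := CL ha hb H.
  by exists x.
case: (ltrP ts 1) => [ts_lt1 | ts_ge1]; last first.
  have ts_eq1 : ts = 1 by apply/le_anti; rewrite ts1 ts_ge1.
  have [x [hx1 hx2]] := tsT; exists x.
  by rewrite ts_eq1 scale1r mul1r in hx1 hx2.
exfalso.
have [x [hx1 hx2]] := tsT.
have xr : N x < rho.
  have : ts * R1 <= R1 by rewrite ler_piMl // ltW.
  lra.
have [s0 s00 hs] := LS xr hr.
pose s := Num.min s0 (1 - ts).
have s0' : 0 < s by rewrite /s lt_min s00 subr_gt0.
have ss0 : s <= s0 by rewrite /s ge_min lexx.
have ss1 : s <= 1 - ts by rewrite /s ge_min lexx orbT.
have [z [hz1 hz2]] := hs s s0' ss0.
have : T (ts + s).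
  split; first by apply/andP; split; lra.
  exists z; split; first by rewrite hz1 hx1 scalerDl.
  have := ND hN x (z - x); rewrite [x + _]addrC subrK.
  lra.
move/(sup_upper_bound hsT); rewrite -/ts; lra.
Qed.

Lemma main_res : exists xs, g xs = y /\ N xs <= N y / mu.
Proof.
have Nge := N_ge0 hN.
have r0 : 0 <= N y / mu by rewrite divr_ge0 // ltW.
have rr : N y / mu < rho by rewrite ltr_pdivrMr // mulrC.
have H : forall d, 0 < d -> exists x, N x <= N y / mu + d /\ N (g x - y) <= d.
  move=> d d0.
  pose R1 := N y / mu + Num.min d ((rho - N y / mu) / 2).
  have m0 : 0 < Num.min d ((rho - N y / mu) / 2).
    by rewrite lt_min d0 /= divr_gt0 // subr_gt0.
  have m1 : Num.min d ((rho - N y / mu) / 2) <= d by rewrite ge_min lexx.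
  have m2 : Num.min d ((rho - N y / mu) / 2) <= (rho - N y / mu) / 2.
    by rewrite ge_min lexx orbT.
  have h1 : N y / mu < R1 by rewrite /R1; lra.
  have h2 : R1 < rho by rewrite /R1; lra.
  have [x [hx1 hx2]] := G h1 h2.
  exists x; split; first by rewrite /R1 in hx2; lra.
  by rewrite hx1 subrr (N0 hN) ltW.
have [x [hx1 hx2]] := CL r0 rr H.
by exists x.
Qed.
End main.


Local Close Scope classical_set_scope.
Unset Implicit Arguments.

Theorem corollary2 (R : realType) (n : nat) (N : 'cV[R]_n -> R)
  (g : 'cV[R]_n -> 'cV[R]_n) (Dg : 'cV[R]_n -> 'M[R]_n) (y : 'cV[R]_n)
  (rho L mu : R) :
  is_vnorm N -> 0 < rho -> 0 <= L -> 0 < mu ->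
  g 0 = 0 ->
  (forall x, N x <= rho -> has_deriv N g x (Dg x)) ->
  (forall xa xb, N xa <= rho -> N xb <= rho ->
     opnorm N (Dg xa - Dg xb) <= L * N (xa - xb)) ->
  (forall x, N x <= rho ->
     Dg x \in unitmx /\ opnorm N (invmx (Dg x)) <= 1 / mu) ->
  N y < mu * rho ->
  exists xs : 'cV[R]_n, g xs = y /\ N xs <= N y / mu.
Proof.
move=> hN rho0 L0 mu0 g0 hD hL hI hy.
exact: (main_res hN L0 mu0 g0 hD hL hI hy).
Qed.
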